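(* Let $\mathcal{O}$ be an operad, $A$ a color of $\mathcal{O}$, and $L\subseteq\mathcal{O}(A)$ a regular language of constants. Let $F:\mathcal{P}\to\mathcal{O}$ be a functor of operads and $R$ a color of $\mathcal{P}$ with $F(R)=A$. Then $F^{-1}(L)\cap\mathcal{P}(R)=\{c\in\mathcal{P}(R)\mid F(c)\in L\}$ is a regular language of constants in $\mathcal{P}$.
   Context: Operads are colored, non-symmetric operads; $\mathcal{O}(A)$ denotes the set of constants (nullary operations) of output color $A$. A functor of operads $p:\mathcal{Q}\to\mathcal{O}$ is ULF if for every operation $\alpha$ of $\mathcal{Q}$ and operations $g,h$ of $\mathcal{O}$ and index $i$ with $p(\alpha)=g\circ_i h$ there is a unique pair $\beta,\gamma$ with $\alpha=\beta\circ_i\gamma$, $p(\beta)=g$, $p(\gamma)=h$; it is finitary if its fibers over every color and every operation are finite. A nondeterministic finite-state automaton over $\mathcal{O}$ is a tuple $M=(\mathcal{O},\mathcal{Q},p,q_r)$ with $p:\mathcal{Q}\to\mathcal{O}$ finitary ULF and $q_r$ a color of $\mathcal{Q}$; it recognizes $\{p(\alpha)\mid\alpha\in\mathcal{Q}(q_r)\}\subseteq\mathcal{O}(p(q_r))$. A subset $L\subseteq\mathcal{O}(A)$ is a regular language of constants if it is the language recognized by such an automaton with $p(q_r)=A$. *)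

(* Defs.v *)
From Stdlib Require List.
From mathcomp Require Import all_boot.
Set Implicit Arguments. Unset Strict Implicit. Unset Printing Implicit Defensive.

(* Colored non-symmetric operads, presented "globally": one carrier of
   operations, each with an input list of colors [dom] and output color [cod];
   partial composition [comp g i h] = g o_i h is a total function that is
   only meaningful when [comp_def g i h] holds. *)

Definition comp_def_gen (Col Op : Type) (dom : Op -> seq Col) (cod : Op -> Col)
  (g : Op) (i : nat) (h : Op) : Prop :=
  exists G1 G2, dom g = G1 ++ cod h :: G2 /\ size G1 = i.

Record operad := Operad {
  Col : Type;
  Op : Type;
  dom : Op -> seq Col;
  cod : Op -> Col;
  oid : Col -> Op;
  comp : Op -> nat -> Op -> Op;
  dom_id : forall A, dom (oid A) = [:: A];
  cod_id : forall A, cod (oid A) = A;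
  dom_comp : forall g i h, comp_def_gen dom cod g i h ->
    dom (comp g i h) = take i (dom g) ++ dom h ++ drop i.+1 (dom g);
  cod_comp : forall g i h, comp_def_gen dom cod g i h ->
    cod (comp g i h) = cod g;
  comp_id_l : forall f, comp (oid (cod f)) 0 f = f;
  comp_id_r : forall f i A, comp_def_gen dom cod f i (oid A) ->
    comp f i (oid A) = f;
  comp_seq : forall f g h i j,
    comp_def_gen dom cod f i g -> comp_def_gen dom cod g j h ->
    comp (comp f i g) (i + j) h = comp f i (comp g j h);
  comp_par : forall f g h i k, i < k ->
    comp_def_gen dom cod f k g -> comp_def_gen dom cod f i h ->
    comp (comp f k g) i h = comp (comp f i h) (k + size (dom h) - 1) g
}.

Definition comp_def (O : operad) (g : Op O) (i : nat) (h : Op O) : Prop :=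
  comp_def_gen (@dom O) (@cod O) g i h.

Definition is_const (O : operad) (A : Col O) (c : Op O) : Prop :=
  dom c = [::] /\ cod c = A.

Record functor (Q O : operad) := Functor {
  fcol : Col Q -> Col O;
  fop : Op Q -> Op O;
  fdom : forall a, dom (fop a) = map fcol (dom a);
  fcod : forall a, cod (fop a) = fcol (cod a);
  fid : forall x, fop (oid x) = oid (fcol x);
  fcomp : forall g i h, comp_def g i h ->
    fop (comp g i h) = comp (fop g) i (fop h)
}.

Definition ULF (Q O : operad) (p : functor Q O) : Prop :=
  forall (a : Op Q) (g h : Op O) (i : nat),
    comp_def g i h -> fop p a = comp g i h ->
    exists b c, [/\ comp_def b i c, a = comp b i c, fop p b = g & fop p c = h]
      /\ forall b' c', comp_def b' i c' -> a = comp b' i c' ->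
           fop p b' = g -> fop p c' = h -> b' = b /\ c' = c.

Definition finite_pred (T : Type) (P : T -> Prop) : Prop :=
  exists s : seq T, forall x, P x -> Stdlib.Lists.List.In x s.

Definition finitary (Q O : operad) (p : functor Q O) : Prop :=
  (forall A : Col O, finite_pred (fun x : Col Q => fcol p x = A)) /\
  (forall f : Op O, finite_pred (fun a : Op Q => fop p a = f)).

(* Language recognized by the NFA (O, Q, p, qr). *)
Definition recognized (Q O : operad) (p : functor Q O) (qr : Col Q)
  (f : Op O) : Prop :=
  exists a : Op Q, is_const qr a /\ fop p a = f.

Definition regular_const (O : operad) (A : Col O) (L : Op O -> Prop) : Prop :=
  exists (Q : operad) (p : functor Q O) (qr : Col Q),
    [/\ ULF p, finitary p, fcol p qr = A &
        forall f, L f <-> recognized p qr f].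

(* Main.v *)
Require Import Defs.
From mathcomp Require Import all_boot.
From mathcomp Require Import zify.
From Stdlib Require Import ClassicalEpsilon ProofIrrelevance.
Set Implicit Arguments. Unset Strict Implicit. Unset Printing Implicit Defensive.

Lemma drop_zip (S T : Type) n (a : seq S) (b : seq T) :
  drop n (zip a b) = zip (drop n a) (drop n b).
Proof. elim: a b n => [|x a IH] [|y b] [|n] //=; [by case: (drop n b) | by case: (drop n a)]. Qed.

Lemma take_zip (S T : Type) n (a : seq S) (b : seq T) :
  take n (zip a b) = zip (take n a) (take n b).
Proof. elim: a b n => [|x a IH] [|y b] [|n] //=; by rewrite IH. Qed.

Lemma drop_mid (T : Type) (G1 G2 : seq T) x : drop (size G1).+1 (G1 ++ x :: G2) = G2.
Proof. elim: G1 => [|? ? IH] /=; [exact: drop0 | exact: IH]. Qed.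

Lemma take_mid (T : Type) (G1 G2 : seq T) x : take (size G1) (G1 ++ x :: G2) = G1.
Proof. by rewrite take_size_cat. Qed.

Lemma cdef_drop_gen (C T : Type) (d : T -> seq C) (c : T -> C) g i h :
  comp_def_gen d c g i h <-> exists G2, drop i (d g) = c h :: G2.
Proof.
split.
- move=> [G1 [G2 [E S]]]; exists G2; by rewrite E -S drop_size_cat.
- move=> [G2 E]; exists (take i (d g)), G2; split; first by rewrite -E cat_take_drop.
  apply: size_takel.
  have := congr1 size E; rewrite size_drop /=; lia.
Qed.

Lemma cdef_drop (O : operad) (g : Op O) i h :
  comp_def g i h <-> exists G2, drop i (dom g) = cod h :: G2.
Proof.
split.
- move=> [G1 [G2 [E S]]]; exists G2; by rewrite E -S drop_size_cat.
- move=> [G2 E]; exists (take i (dom g)), G2; split; first by rewrite -E cat_take_drop.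
  apply: size_takel.
  have := congr1 size E; rewrite size_drop /=; lia.
Qed.

Lemma cdef_seq (O : operad) (f g h : Op O) i j :
  comp_def f i g -> comp_def g j h -> comp_def (Defs.comp f i g) (i + j) h.
Proof.
move=> Hfg Hgh; have [G1 [G2 [Ef Sf]]] := Hfg; have [G1' [G2' [Eg Sg]]] := Hgh.
rewrite /comp_def /comp_def_gen (dom_comp Hfg) Ef Eg -Sf take_mid drop_mid.
exists (G1 ++ G1'), (G2' ++ G2); split; first by rewrite -!catA.
by rewrite size_cat Sg.
Qed.

Lemma cdef_seq2 (O : operad) (f g h : Op O) i j :
  comp_def f i g -> comp_def g j h -> comp_def f i (Defs.comp g j h).
Proof. by move=> Hfg Hgh; rewrite /comp_def /comp_def_gen (cod_comp Hgh). Qed.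

Lemma cdef_par1 (O : operad) (f g h : Op O) i k : i < k ->
  comp_def f k g -> comp_def f i h -> comp_def (Defs.comp f k g) i h.
Proof.
move=> ik Hg Hh; have [G1 [G2 [Ef Sf]]] := Hg.
have /cdef_drop [H2 Eh] := Hh.
apply/cdef_drop; rewrite (dom_comp Hg) Ef -Sf take_mid drop_mid.
move: Eh; rewrite Ef drop_cat Sf ik.
case E: (drop i G1) => [|y X].
  by have := congr1 size E; rewrite size_drop /=; lia.
move=> [Ey _]; exists (X ++ dom g ++ G2); by rewrite drop_cat Sf ik E Ey.
Qed.

Lemma cdef_par2 (O : operad) (f g h : Op O) i k : i < k ->
  comp_def f k g -> comp_def f i h ->
  comp_def (Defs.comp f i h) (k + size (dom h) - 1) g.
Proof.
move=> ik Hg Hh; have /cdef_drop [G2 Eg] := Hg.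
have [H1 [H2 [Ef Sf]]] := Hh.
apply/cdef_drop; rewrite (dom_comp Hh) Ef -Sf take_mid drop_mid catA drop_cat size_cat.
have -> : (k + size (dom h) - 1 < size H1 + size (dom h)) = false by lia.
have : H2 = drop i.+1 (dom f) by rewrite Ef -Sf drop_mid.
move=> ->; rewrite drop_drop.
have -> : k + size (dom h) - 1 - (size H1 + size (dom h)) + i.+1 = k by lia.
by exists G2.
Qed.

Lemma fdef (P O : operad) (F : functor P O) g i h :
  comp_def g i h -> comp_def (fop F g) i (fop F h).
Proof.
move=> [G1 [G2 [E S]]]; exists (map (fcol F) G1), (map (fcol F) G2).
by rewrite fdom E map_cat /= fcod size_map.
Qed.

Lemma sig_eq (T : Type) (P : T -> Prop) (u v : {x | P x}) : proj1_sig u = proj1_sig v -> u = v.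
Proof. case: u v => [x px] [y py] /= E; subst y; f_equal; apply: proof_irrelevance. Qed.

Definition PCol (P Q O : operad) (F : functor P O) (p : functor Q O) :=
  {xq : Col P * Col Q | fcol F xq.1 = fcol p xq.2}.
Definition POp (P Q O : operad) (F : functor P O) (p : functor Q O) :=
  {ab : Op P * Op Q | fop F ab.1 = fop p ab.2}.

Definition mkc (P Q O : operad) (F : functor P O) (p : functor Q O)
  (d : PCol F p) (xq : Col P * Col Q) : PCol F p :=
  match excluded_middle_informative (fcol F xq.1 = fcol p xq.2) with
  | left h => exist _ xq h
  | right _ => d end.

Lemma mkcE (P Q O : operad) (F : functor P O) (p : functor Q O) d xq H :
  @mkc P Q O F p d xq = exist _ xq H.
Proof. rewrite /mkc; case: excluded_middle_informative => // h; exact: sig_eq. Qed.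

Lemma pcod_pf (P Q O : operad) (F : functor P O) (p : functor Q O) (ab : POp F p) :
  fcol F (cod (proj1_sig ab).1) = fcol p (cod (proj1_sig ab).2).
Proof. by rewrite -!fcod (proj2_sig ab). Qed.

Definition pcod (P Q O : operad) (F : functor P O) (p : functor Q O) (ab : POp F p) : PCol F p :=
  exist _ (cod (proj1_sig ab).1, cod (proj1_sig ab).2) (pcod_pf ab).

Definition pdom (P Q O : operad) (F : functor P O) (p : functor Q O) (ab : POp F p) : seq (PCol F p) :=
  map (mkc (pcod ab)) (zip (dom (proj1_sig ab).1) (dom (proj1_sig ab).2)).

Lemma poid_pf (P Q O : operad) (F : functor P O) (p : functor Q O) (x : PCol F p) :
  fop F (oid (proj1_sig x).1) = fop p (oid (proj1_sig x).2).
Proof. by rewrite !fid (proj2_sig x). Qed.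

Definition poid (P Q O : operad) (F : functor P O) (p : functor Q O) (x : PCol F p) : POp F p :=
  exist _ (oid (proj1_sig x).1, oid (proj1_sig x).2) (poid_pf x).

Lemma pcomp_pf (P Q O : operad) (F : functor P O) (p : functor Q O) (g h : POp F p) i :
  comp_def (proj1_sig g).1 i (proj1_sig h).1 /\ comp_def (proj1_sig g).2 i (proj1_sig h).2 ->
  fop F (Defs.comp (proj1_sig g).1 i (proj1_sig h).1) = fop p (Defs.comp (proj1_sig g).2 i (proj1_sig h).2).
Proof. by move=> [H1 H2]; rewrite !fcomp // (proj2_sig g) (proj2_sig h). Qed.

Definition pcomp (P Q O : operad) (F : functor P O) (p : functor Q O) (g : POp F p) i (h : POp F p) : POp F p :=
  match excluded_middle_informative
    (comp_def (proj1_sig g).1 i (proj1_sig h).1 /\ comp_def (proj1_sig g).2 i (proj1_sig h).2) with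
  | left H => exist _ (Defs.comp (proj1_sig g).1 i (proj1_sig h).1, Defs.comp (proj1_sig g).2 i (proj1_sig h).2) (pcomp_pf H)
  | right _ => g end.

Lemma pcompE (P Q O : operad) (F : functor P O) (p : functor Q O) (g h : POp F p) i :
  comp_def (proj1_sig g).1 i (proj1_sig h).1 -> comp_def (proj1_sig g).2 i (proj1_sig h).2 ->
  proj1_sig (pcomp g i h) = (Defs.comp (proj1_sig g).1 i (proj1_sig h).1, Defs.comp (proj1_sig g).2 i (proj1_sig h).2).
Proof. move=> H1 H2; rewrite /pcomp; case: excluded_middle_informative => //; tauto. Qed.

Lemma map_col_eq (P Q O : operad) (F : functor P O) (p : functor Q O) (ab : POp F p) :
  map (fcol F) (dom (proj1_sig ab).1) = map (fcol p) (dom (proj1_sig ab).2).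
Proof. by rewrite -!fdom (proj2_sig ab). Qed.

Lemma size_dom_eq (P Q O : operad) (F : functor P O) (p : functor Q O) (ab : POp F p) :
  size (dom (proj1_sig ab).1) = size (dom (proj1_sig ab).2).
Proof. by rewrite -(size_map (fcol F)) map_col_eq size_map. Qed.

Lemma val_mkc (P Q O : operad) (F : functor P O) (p : functor Q O) d l1 l2 :
  map (fcol F) l1 = map (fcol p) l2 ->
  map (@proj1_sig _ _) (map (@mkc P Q O F p d) (zip l1 l2)) = zip l1 l2.
Proof.
elim: l1 l2 => [|x l1 IH] [|y l2] //= [E1 E2].
by rewrite (@mkcE P Q O F p d (x,y) E1) /= IH.
Qed.

Lemma val_pdom (P Q O : operad) (F : functor P O) (p : functor Q O) (ab : POp F p) :
  map (@proj1_sig _ _) (pdom ab) = zip (dom (proj1_sig ab).1) (dom (proj1_sig ab).2).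
Proof. by rewrite /pdom val_mkc // map_col_eq. Qed.

Lemma val_inj_seq (T : Type) (P : T -> Prop) (l1 l2 : seq {x | P x}) :
  map (@proj1_sig _ _) l1 = map (@proj1_sig _ _) l2 -> l1 = l2.
Proof. apply: inj_map => u v; exact: sig_eq. Qed.

Lemma pdef_iff (P Q O : operad) (F : functor P O) (p : functor Q O) (g h : POp F p) i :
  comp_def_gen (@pdom P Q O F p) (@pcod P Q O F p) g i h <->
  comp_def (proj1_sig g).1 i (proj1_sig h).1 /\ comp_def (proj1_sig g).2 i (proj1_sig h).2.
Proof.
have E0 : forall i, map (@proj1_sig _ _) (drop i (pdom g)) =
   zip (drop i (dom (proj1_sig g).1)) (drop i (dom (proj1_sig g).2)).
  by move=> n; rewrite map_drop val_pdom drop_zip.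
split.
- move=> [G1 [G2 [E S]]].
  have : drop i (pdom g) = pcod h :: G2 by rewrite E -S drop_size_cat.
  move=> /(congr1 (map (@proj1_sig _ _))); rewrite E0.
  case Ea: (drop i (dom (proj1_sig g).1)) => [|x s]; case Eb: (drop i (dom (proj1_sig g).2)) => [|y t] //= [Ex Ey _].
  by split; apply/cdef_drop; [exists s; rewrite Ea Ex | exists t; rewrite Eb Ey].
- move=> [/cdef_drop [s Es] /cdef_drop [t Et]].
  apply/cdef_drop_gen; rewrite /pdom -map_drop drop_zip Es Et /=.
  eexists; congr (_ :: _); exact: mkcE.
Qed.

Lemma cdef_id_l (O : operad) (f : Op O) : comp_def (oid (cod f)) 0 f.
Proof. by exists [::], [::]; rewrite dom_id. Qed.


Lemma pdom_id (P Q O : operad) (F : functor P O) (p : functor Q O) (x : PCol F p) :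
  pdom (poid x) = [:: x].
Proof. rewrite /pdom /= !dom_id /=; case: x => [[x1 x2] px]; congr (_ :: _); exact: mkcE. Qed.

Lemma pcod_id (P Q O : operad) (F : functor P O) (p : functor Q O) (x : PCol F p) :
  pcod (poid x) = x.
Proof. apply: sig_eq; rewrite /= !cod_id; by case: x => [[]]. Qed.

Lemma pdom_comp (P Q O : operad) (F : functor P O) (p : functor Q O) (g : POp F p) i (h : POp F p) :
  comp_def_gen (@pdom P Q O F p) (@pcod P Q O F p) g i h ->
  pdom (pcomp g i h) = take i (pdom g) ++ pdom h ++ drop i.+1 (pdom g).
Proof.
move=> /pdef_iff [H1 H2]; apply: val_inj_seq.
rewrite val_pdom (pcompE H1 H2) /= (dom_comp H1) (dom_comp H2) !map_cat map_take map_drop !val_pdom take_zip drop_zip.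
rewrite zip_cat; last by rewrite !size_take size_dom_eq.
rewrite zip_cat //; exact: size_dom_eq.
Qed.

Lemma pcod_comp (P Q O : operad) (F : functor P O) (p : functor Q O) (g : POp F p) i (h : POp F p) :
  comp_def_gen (@pdom P Q O F p) (@pcod P Q O F p) g i h ->
  pcod (pcomp g i h) = pcod g.
Proof. move=> /pdef_iff [H1 H2]; apply: sig_eq; by rewrite /= (pcompE H1 H2) /= (cod_comp H1) (cod_comp H2). Qed.

Lemma pcomp_id_l (P Q O : operad) (F : functor P O) (p : functor Q O) (f : POp F p) :
  pcomp (poid (pcod f)) 0 f = f.
Proof.
apply: sig_eq; rewrite (pcompE (g:=poid (pcod f)) (h:=f) (cdef_id_l _) (cdef_id_l _)) /= !comp_id_l.
by case: f => [[]].
Qed.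

Lemma pcomp_id_r (P Q O : operad) (F : functor P O) (p : functor Q O) (f : POp F p) i A :
  comp_def_gen (@pdom P Q O F p) (@pcod P Q O F p) f i (poid A) -> pcomp f i (poid A) = f.
Proof.
move=> /pdef_iff [H1 H2]; apply: sig_eq; rewrite (pcompE H1 H2) /= !comp_id_r //.
by case: f {H1 H2} => [[]].
Qed.

Lemma pcomp_seq (P Q O : operad) (F : functor P O) (p : functor Q O) (f g h : POp F p) i j :
  comp_def_gen (@pdom P Q O F p) (@pcod P Q O F p) f i g ->
  comp_def_gen (@pdom P Q O F p) (@pcod P Q O F p) g j h ->
  pcomp (pcomp f i g) (i + j) h = pcomp f i (pcomp g j h).
Proof.
move=> /pdef_iff [F1 F2] /pdef_iff [G1 G2]; apply: sig_eq.
have E := pcompE F1 F2; have E' := pcompE G1 G2.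
have D1 : comp_def (proj1_sig (pcomp f i g)).1 (i + j) (proj1_sig h).1 by rewrite E; exact: cdef_seq.
have D2 : comp_def (proj1_sig (pcomp f i g)).2 (i + j) (proj1_sig h).2 by rewrite E; exact: cdef_seq.
have D1' : comp_def (proj1_sig f).1 i (proj1_sig (pcomp g j h)).1 by rewrite E'; exact: cdef_seq2.
have D2' : comp_def (proj1_sig f).2 i (proj1_sig (pcomp g j h)).2 by rewrite E'; exact: cdef_seq2.
by rewrite (pcompE D1 D2) (pcompE D1' D2') E E' /= (comp_seq F1 G1) (comp_seq F2 G2).
Qed.

Lemma size_pdom (P Q O : operad) (F : functor P O) (p : functor Q O) (h : POp F p) :
  size (pdom h) = size (dom (proj1_sig h).1).
Proof. by rewrite /pdom size_map size_zip size_dom_eq minnn. Qed.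

Lemma pcomp_par (P Q O : operad) (F : functor P O) (p : functor Q O) (f g h : POp F p) i k :
  i < k ->
  comp_def_gen (@pdom P Q O F p) (@pcod P Q O F p) f k g ->
  comp_def_gen (@pdom P Q O F p) (@pcod P Q O F p) f i h ->
  pcomp (pcomp f k g) i h = pcomp (pcomp f i h) (k + size (pdom h) - 1) g.
Proof.
move=> ik /pdef_iff [F1 F2] /pdef_iff [G1 G2]; apply: sig_eq; rewrite size_pdom.
have E := pcompE F1 F2; have E' := pcompE G1 G2.
have D1 : comp_def (proj1_sig (pcomp f k g)).1 i (proj1_sig h).1 by rewrite E; exact: cdef_par1.
have D2 : comp_def (proj1_sig (pcomp f k g)).2 i (proj1_sig h).2 by rewrite E; exact: cdef_par1.
have D1' : comp_def (proj1_sig (pcomp f i h)).1 (k + size (dom (proj1_sig h).1) - 1) (proj1_sig g).1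
  by rewrite E'; exact: cdef_par2.
have D2' : comp_def (proj1_sig (pcomp f i h)).2 (k + size (dom (proj1_sig h).1) - 1) (proj1_sig g).2
  by rewrite E' size_dom_eq; exact: cdef_par2.
rewrite (pcompE D1 D2) (pcompE D1' D2') E E' /= (comp_par ik F1 G1) (comp_par ik F2 G2).
by rewrite size_dom_eq.
Qed.

Definition PB (P Q O : operad) (F : functor P O) (p : functor Q O) : operad :=
  @Operad (PCol F p) (POp F p) (@pdom P Q O F p) (@pcod P Q O F p) (@poid P Q O F p) (@pcomp P Q O F p)
    (@pdom_id P Q O F p) (@pcod_id P Q O F p) (@pdom_comp P Q O F p) (@pcod_comp P Q O F p)
    (@pcomp_id_l P Q O F p) (@pcomp_id_r P Q O F p) (@pcomp_seq P Q O F p) (@pcomp_par P Q O F p).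

Lemma pi_fdom (P Q O : operad) (F : functor P O) (p : functor Q O) (a : Op (PB F p)) :
  dom (proj1_sig (a : POp F p)).1 = map (fun x : PCol F p => (proj1_sig x).1) (dom a).
Proof.
rewrite -[RHS]/(map (fst \o (@proj1_sig _ _)) (pdom a)) map_comp val_pdom.
by symmetry; apply: unzip1_zip; rewrite size_dom_eq.
Qed.

Lemma pi_fcomp (P Q O : operad) (F : functor P O) (p : functor Q O) (g : Op (PB F p)) i h :
  comp_def g i h ->
  (proj1_sig (Defs.comp g i h : POp F p)).1 = Defs.comp (proj1_sig (g : POp F p)).1 i (proj1_sig (h : POp F p)).1.
Proof. by move=> /pdef_iff [H1 H2]; rewrite /= (pcompE H1 H2). Qed.

Definition piF (P Q O : operad) (F : functor P O) (p : functor Q O) : functor (PB F p) P :=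
  @Functor (PB F p) P (fun x : PCol F p => (proj1_sig x).1) (fun a : POp F p => (proj1_sig a).1)
    (@pi_fdom P Q O F p) (fun _ => erefl) (fun _ => erefl) (@pi_fcomp P Q O F p).

Lemma piF_ULF (P Q O : operad) (F : functor P O) (p : functor Q O) :
  ULF p -> ULF (piF F p).
Proof.
move=> Hp a g h i Hd Ea.
have Eb : fop p (proj1_sig (a : POp F p)).2 = Defs.comp (fop F g) i (fop F h).
  by rewrite -(proj2_sig a) /= -fcomp // -Ea.
have [b1 [c1 [[Dbc Eb' Pb1 Pc1] Uniq]]] := Hp _ _ _ i (fdef F Hd) Eb.
pose B : POp F p := exist _ (g, b1) (esym Pb1).
pose C : POp F p := exist _ (h, c1) (esym Pc1).
have DBC : comp_def (B : Op (PB F p)) i C by apply/pdef_iff.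
exists B, C; split.
  split=> //; apply: sig_eq; rewrite /= (pcompE (g:=B) (h:=C) Hd Dbc) /=.
  by case: a Ea Eb' Eb Uniq => [[a1 a2] pa] /= -> -> _ _.
move=> b' c' /pdef_iff [D1 D2] Ea' Fb' Fc'.
have := congr1 (@proj1_sig _ _) Ea'; rewrite /= (pcompE D1 D2) => /(congr1 snd) /= E2.
have [||U1 U2] := Uniq _ _ D2 E2.
- by rewrite -(proj2_sig b') -Fb'.
- by rewrite -(proj2_sig c') -Fc'.
split; apply: sig_eq.
  by move: Fb' U1; case: b' {D1 D2 Ea' E2} => [[x y] ?] /= -> ->.
by move: Fc' U2; case: c' {D1 D2 Ea' E2} => [[x y] ?] /= -> ->.
Qed.

Lemma In_pmap (A B : Type) (f : A -> option B) s a b :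
  Stdlib.Lists.List.In a s -> f a = Some b -> Stdlib.Lists.List.In b (pmap f s).
Proof.
elim: s => //= a' s IH [->|H] E; first by rewrite E; left.
case: (f a') => [?|]; [right|]; exact: IH.
Qed.

Lemma piF_fin (P Q O : operad) (F : functor P O) (p : functor Q O) :
  finitary p -> finitary (piF F p).
Proof.
move=> [fc fo]; split.
- move=> x; have [s Hs] := fc (fcol F x).
  pose f q : option (PCol F p) := match excluded_middle_informative (fcol F x = fcol p q) with
    | left e => Some (exist (fun xq : Col P * Col Q => fcol F xq.1 = fcol p xq.2) (x, q) e)
    | right _ => None end.
  exists (pmap f s) => -[[y1 y2] py] /= E; subst y1.
  apply: (In_pmap (a := y2)); first by apply: Hs; rewrite py.
  rewrite /f; case: excluded_middle_informative => e; last by [].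
  by congr Some; apply: sig_eq.
- move=> x; have [s Hs] := fo (fop F x).
  pose f q : option (POp F p) := match excluded_middle_informative (fop F x = fop p q) with
    | left e => Some (exist (fun xq : Op P * Op Q => fop F xq.1 = fop p xq.2) (x, q) e)
    | right _ => None end.
  exists (pmap f s) => -[[y1 y2] py] /= E; subst y1.
  apply: (In_pmap (a := y2)); first by apply: Hs; rewrite py.
  rewrite /f; case: excluded_middle_informative => e; last by [].
  by congr Some; apply: sig_eq.
Qed.

Theorem mainTheorem9 (O P : operad) (A : Col O) (L : Op O -> Prop)
  (F : functor P O) (R : Col P) :
  regular_const A L -> fcol F R = A ->
  regular_const R (fun c : Op P => is_const R c /\ L (fop F c)).
Proof.
move=> [Q [p [qr [Hulf Hfin Hqr HL]]]] FR.
have pR : fcol F R = fcol p qr by rewrite FR Hqr.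
pose qr' : PCol F p := exist _ (R, qr) pR.
exists (PB F p), (piF F p), qr'; split => //.
- exact: piF_ULF.
- exact: piF_fin.
move=> c; split.
- move=> [[Dc Cc] /HL [b [[Db Cb] Eb]]].
  exists (exist _ (c, b) (esym Eb) : POp F p); split => //; split.
    by rewrite /= /pdom /= Dc Db.
  by apply: sig_eq; rewrite /= Cc Cb.
- move=> [ab [[Dab Cab] <-]].
  have Z1 : size (dom (proj1_sig (ab : POp F p)).1) = 0 by rewrite -size_pdom; move: Dab => /= ->.
  have Z2 : size (dom (proj1_sig (ab : POp F p)).2) = 0 by rewrite -size_dom_eq.
  have := congr1 (@proj1_sig _ _) Cab => /= -[C1 C2].
  split; first by split => //; apply/size0nil.
  apply/HL; exists (proj1_sig (ab : POp F p)).2; split; first by split => //; apply/size0nil.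
  by rewrite -(proj2_sig ab).
Qed.
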